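(* Let $A,B\in\mathcal{S}_n$ and $x\in\mathbb{R}^n$. There exists a maximal lower bound $C$ of $A$ and $B$ in the Löwner order such that $Ax=Cx$ if and only if $x^TAx<x^TBx$ or $Ax=Bx$.
   Context: $\mathcal{S}_n$ is the set of real symmetric $n\times n$ matrices. Löwner order: $X\preceq Y$ iff $y^TXy\le y^TYy$ for all $y$. A maximal lower bound of $A,B$ is a $C\in\mathcal{S}_n$ with $C\preceq A$, $C\preceq B$ such that no $C'\ne C$ with $C\preceq C'$ satisfies $C'\preceq A$, $C'\preceq B$. *)

(* Defs.v *)
From HB Require Import structures.
From mathcomp Require Import all_boot all_order all_algebra.
Set Implicit Arguments. Unset Strict Implicit. Unset Printing Implicit Defensive.
Import Order.TTheory GRing.Theory Num.Theory.
Local Open Scope ring_scope.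

Definition symmx (R : rcfType) (n : nat) (X : 'M[R]_n) : Prop := X^T = X.

Definition qform (R : rcfType) (n : nat) (X : 'M[R]_n) (y : 'cV[R]_n) : R :=
  (y^T *m X *m y) 0 0.

Definition loewner_le (R : rcfType) (n : nat) (X Y : 'M[R]_n) : Prop :=
  forall y : 'cV[R]_n, qform X y <= qform Y y.

Definition maximal_lower_bound (R : rcfType) (n : nat) (A B C : 'M[R]_n) : Prop :=
  [/\ symmx C, loewner_le C A, loewner_le C B &
      forall C' : 'M[R]_n, symmx C' -> loewner_le C C' ->
        loewner_le C' A -> loewner_le C' B -> C' = C].

(* Main.v *)
Require Import Defs.
From HB Require Import structures.
From Stdlib Require Import Classical.
From mathcomp Require Import all_boot all_order all_algebra ring lra.
Import Order.TTheory GRing.Theory Num.Theory.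
Local Open Scope ring_scope.

Section Aux.
Variables (R : rcfType) (n : nat).
Implicit Types (M N X Y D P : 'M[R]_n) (u v w y z : 'cV[R]_n).

Definition psd M := forall y, 0 <= qform M y.

Lemma qformD M N y : qform (M + N) y = qform M y + qform N y.
Proof. by rewrite /qform mulmxDr mulmxDl mxE. Qed.
Lemma qformN M y : qform (- M) y = - qform M y.
Proof. by rewrite /qform mulmxN mulNmx mxE. Qed.
Lemma qformB M N y : qform (M - N) y = qform M y - qform N y.
Proof. by rewrite qformD qformN. Qed.
Lemma qformZ a M y : qform (a *: M) y = a * qform M y.
Proof. by rewrite /qform -scalemxAr -scalemxAl mxE. Qed.
Lemma qform0 y : qform 0 y = 0.
Proof. by rewrite /qform mulmx0 mul0mx mxE. Qed.

Lemma mx11_mul (a b : 'M[R]_1) : (a *m b) 0 0 = a 0 0 * b 0 0.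
Proof. by rewrite mxE big_ord1. Qed.

Lemma tr11 (a : 'M[R]_1) : a^T 0 0 = a 0 0.
Proof. by rewrite mxE. Qed.

Lemma dot_self_eq0 u : (u^T *m u) 0 0 = 0 -> u = 0.
Proof.
rewrite mxE => /eqP; rewrite psumr_eq0; last by move=> i _; rewrite mxE sqr_ge0.
move=> /allP H; apply/matrixP => i j; rewrite (ord1 j) !mxE.
have /implyP := H i (mem_index_enum _). rewrite mxE => /(_ isT) /eqP.
by move/eqP; rewrite mulf_eq0 orbb => /eqP.
Qed.

Lemma eD (A B : 'M[R]_1) : (A + B) 0 0 = A 0 0 + B 0 0. Proof. by rewrite mxE. Qed.
Lemma eZ a (A : 'M[R]_1) : (a *: A) 0 0 = a * A 0 0. Proof. by rewrite mxE. Qed.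
Lemma eN (A : 'M[R]_1) : (- A) 0 0 = - A 0 0. Proof. by rewrite mxE. Qed.

Lemma bf_sym M u w : M^T = M -> (u^T *m M *m w) 0 0 = (w^T *m M *m u) 0 0.
Proof.
move=> sM; rewrite -tr11 !trmx_mul trmxK sM mulmxA //.
Qed.

Lemma qform_add M u w t : M^T = M ->
  qform M (u + t *: w) = qform M u + 2 * t * (w^T *m M *m u) 0 0 + t ^+ 2 * qform M w.
Proof.
move=> sM; have tD : (u + t *: w)^T = u^T + t *: w^T by rewrite raddfD /= linearZ.
rewrite /qform tD !mulmxDl !mulmxDr.
rewrite -!scalemxAl -!scalemxAr !eD !eZ (bf_sym M u w sM); ring.
Qed.

Lemma psd_zero M y : M^T = M -> psd M -> qform M y = 0 -> M *m y = 0.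
Proof.
move=> sM pM q0.
pose u := M *m y. pose a := (u^T *m M *m y) 0 0. pose b := qform M u.
have b0 : 0 <= b by apply: pM.
have : 0 <= qform M (y + (- a / (b + 1)) *: u) by apply: pM.
rewrite qform_add // q0 add0r -/a -/b.
have b1 : 0 < b + 1 by rewrite ltr_wpDl.
move=> H.
have a0 : a = 0.
  apply/eqP; rewrite -sqrf_eq0 eq_le sqr_ge0 andbT.
  have E : (2 * (- a / (b + 1)) * a + (- a / (b + 1)) ^+ 2 * b) * (b+1)^+2
      = - (a ^+ 2) * (b + 2) by field; rewrite gt_eqF.
  have : 0 <= - (a ^+ 2) * (b + 2) by rewrite -E mulr_ge0 // exprn_ge0 // ltW.
  have b2 : 0 < b + 2 by lra.
  nra.
apply: dot_self_eq0; rewrite -a0 /a /u mulmxA //.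
Qed.


Lemma psd_le_ker P X (k : 'cV[R]_n) : P^T = P -> psd P -> psd (X - P) -> X *m k = 0 -> P *m k = 0.
Proof.
move=> sP pP pXP Xk; apply: psd_zero => //.
have h1 := pP k; have h2 := pXP k; move: h2.
rewrite qformB {1}/qform -mulmxA Xk mulmx0 mxE => h2.
apply/eqP; rewrite eq_le h1 andbT; lra.
Qed.

Lemma mx_act0 P : (forall v : 'cV[R]_n, P *m v = 0) -> P = 0.
Proof.
move=> H; apply/matrixP => i j.
have := congr1 (fun M : 'cV[R]_n => M i 0) (H (delta_mx j 0)).
by rewrite -colE !mxE.
Qed.

Lemma outer_mul v y : (v *m v^T) *m y = (v^T *m y) 0 0 *: v.
Proof. set a := (v^T *m y) 0 0. by rewrite -mulmxA [v^T *m y]mx11_scalar mul_mx_scalar. Qed.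

Lemma dot_sym u w : (u^T *m w) 0 0 = (w^T *m u) 0 0.
Proof. by rewrite -tr11 trmx_mul trmxK. Qed.

Lemma qform_outer v y : qform (v *m v^T) y = (v^T *m y) 0 0 ^+ 2.
Proof.
by rewrite /qform mulmxA -(mulmxA (y^T *m v)) mx11_mul (dot_sym y v) expr2.
Qed.

Lemma form0_mx0 D : D^T = D -> (forall z, qform D z = 0) -> D = 0.
Proof.
move=> sD H; apply: mx_act0 => y.
have := H (y + 1 *: (D *m y)).
rewrite qform_add // !H add0r mulr0 addr0 mulr1 => /eqP.
rewrite mulf_eq0 pnatr_eq0 /= => /eqP h.
by apply: dot_self_eq0; rewrite -h mulmxA.
Qed.

Lemma rank_drop D' D F z : D' = F *m D -> D' *m z = 0 -> D *m z != 0 ->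
  (\rank D' < \rank D)%N.
Proof.
move=> eD Dz nz.
have : (D' < D)%MS.
  rewrite ltmxE eD submxMl /=; apply/negP => /submxP [G eG].
  by move: nz; rewrite eG -mulmxA -eD Dz mulmx0 eqxx.
by rewrite ltmxErank => /andP [].
Qed.


Inductive good D X Y : Prop :=
  Good of X^T = X & Y^T = Y & psd X & psd Y & Y - X = D &
      (forall w, exists k1 k2, w = k1 + k2 /\ X *m k1 = 0 /\ Y *m k2 = 0) &
      (forall w, D *m w = 0 -> X *m w = 0 /\ Y *m w = 0).

Lemma good_opp D X Y : good D X Y -> good (- D) Y X.
Proof.
case=> sX sY pX pY eD ks kr; split => //.
- by rewrite -eD opprB.
- move=> w; have [k1 [k2 [e [h1 h2]]]] := ks w.
  by exists k2, k1; rewrite addrC.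
- move=> w; rewrite mulNmx => /eqP; rewrite oppr_eq0 => /eqP /kr [] //.
Qed.

Lemma good0 : good 0 0 0.
Proof.
split; rewrite ?trmx0 ?subrr //;
  first [ by move=> y; rewrite qform0
        | by move=> w; exists w, 0; rewrite addr0 !mul0mx
        | by move=> w _; rewrite mul0mx ].
Qed.

Definition Dp D z := D - (qform D z)^-1 *: ((D *m z) *m (D *m z)^T).

Lemma vz D z : ((D *m z)^T *m z) 0 0 = qform D z.
Proof. by rewrite dot_sym /qform mulmxA. Qed.

Lemma vT D z : D^T = D -> (D *m z)^T = z^T *m D.
Proof. by move=> sD; rewrite trmx_mul sD. Qed.

Lemma Dp_z D z : qform D z != 0 -> Dp D z *m z = 0.
Proof.
move=> c0; rewrite /Dp mulmxBl -scalemxAl outer_mul vz scalerA mulVf // scale1r.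
by rewrite subrr.
Qed.

Lemma Dp_ker D z w : D^T = D -> D *m w = 0 ->
  ((D *m z)^T *m w) 0 0 = 0 /\ Dp D z *m w = 0.
Proof.
move=> sD Dw; have h : ((D *m z)^T *m w) 0 0 = 0.
  by rewrite vT // -mulmxA Dw mulmx0 mxE.
split => //.
by rewrite /Dp mulmxBl -scalemxAl outer_mul h Dw scale0r scaler0 subr0.
Qed.

Lemma Dp_sym D z : D^T = D -> (Dp D z)^T = Dp D z.
Proof.
move=> sD; rewrite /Dp raddfB /= linearZ /= sD trmx_mul trmxK //.
Qed.

Lemma Dp_opp D z : Dp (- D) z = - Dp D z.
Proof.
rewrite /Dp qformN invrN mulNmx raddfN /= mulNmx mulmxN opprK scaleNr.
by rewrite opprB opprK addrC.
Qed.

Lemma step_pos D z X' Y' : D^T = D -> 0 < qform D z -> good (Dp D z) X' Y' ->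
  exists X Y, good D X Y /\ X *m z = 0.
Proof.
move=> sD cpos [sX sY pX pY eYX ks kr].
have c0 : qform D z != 0 by rewrite gt_eqF.
set c := qform D z in cpos c0 *.
set v := D *m z.
have [Xz Yz] := kr z (@Dp_z D z c0).
exists X', (Y' + c^-1 *: (v *m v^T)); split => //; split => //.
- by rewrite raddfD /= linearZ /= sY trmx_mul trmxK.
- move=> y; rewrite qformD qformZ qform_outer.
  by rewrite addr_ge0 // mulr_ge0 ?invr_ge0 ?sqr_ge0 // ltW.
- by rewrite addrAC eYX /Dp subrK.
- move=> w; have [k1 [k2 [e [h1 h2]]]] := ks w.
  pose a := c^-1 * (v^T *m k2) 0 0.
  exists (k1 + a *: z), (k2 - a *: z); split; last split.
  + by rewrite addrACA subrr addr0.
  + by rewrite mulmxDr -scalemxAr h1 Xz scaler0 addr0.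
  + have hv : (v^T *m (k2 - a *: z)) 0 0 = 0.
      by rewrite mulmxBr eD eN -scalemxAr eZ vz /a -/c; field.
    rewrite mulmxDl mulmxBr h2 -scalemxAr Yz scaler0 subr0 add0r.
    by rewrite -scalemxAl outer_mul hv scale0r scaler0.
- move=> w Dw; have [h1 h2] := @Dp_ker D z w sD Dw.
  have [k1 k2] := kr w h2; split => //.
  by rewrite mulmxDl k2 -scalemxAl outer_mul h1 scale0r scaler0 addr0.
Qed.


Lemma core m : forall D, (\rank D <= m)%N -> D^T = D -> exists X Y, good D X Y.
Proof.
elim: m => [|m IH] D rk sD.
  have -> : D = 0 by apply/eqP; rewrite -mxrank_eq0 -leqn0.
  by exists 0, 0; exact: good0.
case: (eqVneq D 0) => [->|nD]; first by exists 0, 0; exact: good0.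
have [z hz] : exists z, qform D z != 0.
  apply: NNPP => Hn; move/eqP: nD; apply; apply: form0_mx0 => // z.
  apply/eqP/negPn/negP => h; apply: Hn; by exists z.
have Dz0 : D *m z != 0.
  by apply/eqP => h; move: hz; rewrite /qform -mulmxA h mulmx0 mxE eqxx.
have eqF : Dp D z = (1%:M - (qform D z)^-1 *: ((D *m z) *m z^T)) *m D.
  by rewrite /Dp mulmxBl mul1mx -scalemxAl -(mulmxA (D *m z)) (@vT D z sD).
have rk' : (\rank (Dp D z) <= m)%N.
  have h := @rank_drop _ _ _ z eqF (@Dp_z D z hz) Dz0.
  by rewrite -ltnS; exact: leq_trans h rk.
have [X' [Y' g]] := IH _ rk' (@Dp_sym D z sD).
case: (ltgtP (qform D z) 0) => [cneg|cpos|c0]; last by rewrite c0 eqxx in hz.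
- have g2 : good (Dp (- D) z) Y' X' by rewrite Dp_opp; exact: good_opp.
  have sND : (- D)^T = - D by rewrite raddfN /= sD.
  have cp : 0 < qform (- D) z by rewrite qformN oppr_gt0.
  have [X [Y [g3 _]]] := @step_pos (- D) z Y' X' sND cp g2.
  by exists Y, X; have := @good_opp _ _ _ g3; rewrite opprK.
- have [X [Y [g3 _]]] := @step_pos D z X' Y' sD cpos g.
  by exists X, Y.
Qed.

End Aux.
Arguments psd {R n}. Arguments good {R n}. Arguments Dp {R n}.
Arguments psd_zero {R n}. Arguments qformB {R n}. Arguments qformD {R n}.
Arguments qformN {R n}. Arguments Dp_sym {R n}. Arguments mx_act0 {R n}.
Arguments psd_le_ker {R n}.

Theorem proposition4p5 (R : rcfType) (n : nat) (A B : 'M[R]_n) (x : 'cV[R]_n) :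
  symmx A -> symmx B ->
  ((exists C : 'M[R]_n, maximal_lower_bound A B C /\ A *m x = C *m x) <->
   (qform A x < qform B x \/ A *m x = B *m x)).
Proof.
move=> sA sB; split.
- case=> C [[sC lCA lCB maxC] eAx].
  case: (ltP (qform A x) (qform B x)) => [lt|le]; [by left|right].
  have hA : qform A x = qform C x by rewrite /qform -!mulmxA eAx.
  have sBC : (B - C)^T = B - C by rewrite raddfB /= sB sC.
  have pBC : psd (B - C) by move=> y; rewrite qformB subr_ge0; exact: lCB.
  have q0 : qform (B - C) x = 0 by rewrite qformB; have := lCB x; lra.
  have := psd_zero _ _ sBC pBC q0; rewrite mulmxBl => /eqP; rewrite subr_eq0 => /eqP ->.
  by [].
- move=> H.
  set D := B - A.
  have sD : D^T = D by rewrite raddfB /= sA sB.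
  have [X [Y [g Xx]]] : exists X Y, good D X Y /\ X *m x = 0.
    case: H => [lt|eq].
    + have cpos : 0 < qform D x by rewrite qformB subr_gt0.
      have [X' [Y' g]] := @core R n _ (Dp D x) (leqnn _) (Dp_sym _ x sD).
      exact: (@step_pos R n D x X' Y' sD cpos g).
    + have Dx : D *m x = 0 by rewrite mulmxBl eq subrr.
      have [X [Y g]] := @core R n _ D (leqnn _) sD.
      exists X, Y; split => //; case: g => _ _ _ _ _ _ kr; exact: (proj1 (kr x Dx)).
  case: g => sX sY pX pY eYX ks kr.
  have hY : forall y, qform Y y = qform B y - qform A y + qform X y.
    by move=> y; rewrite -[Y](subrK X) eYX /D qformD qformB.
  exists (A - X); split; last by rewrite mulmxBl Xx subr0.
  split.
  + by rewrite /symmx raddfB /= sA sX.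
  + by move=> y; rewrite qformB; have := pX y; lra.
  + by move=> y; rewrite qformB; have := pY y; rewrite hY; lra.
  + move=> C' sC' lCC' lC'A lC'B.
    set P := C' - (A - X).
    have sP : P^T = P by rewrite /P raddfB /= sC' raddfB /= sA sX.
    have pP : psd P by move=> y; rewrite qformB subr_ge0; exact: lCC'.
    have pXP : psd (X - P).
      by move=> y; rewrite /P !qformB; have := lC'A y; lra.
    have pYP : psd (Y - P).
      by move=> y; rewrite /P !qformB hY; have := lC'B y; lra.
    have P0 : P = 0.
      apply: mx_act0 => w; have [k1 [k2 [e [h1 h2]]]] := ks w.
      rewrite e mulmxDr (psd_le_ker _ _ _ sP pP pXP h1) (psd_le_ker _ _ _ sP pP pYP h2).
      by rewrite addr0.
    by apply/eqP; rewrite -subr_eq0 -/P P0.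
Qed.
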